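(* Let $m,n\in\mathbb{N}$ and let $H_{m,n}=\langle x^m,y^n\rangle\le F$, where $x=x_0$ and $y=x_0^2x_1$. Then there is an element $h\in H_{m,n}$ and a dyadic fraction $\alpha\in(0,1)$ such that $h(\alpha)=\alpha$, $h'(\alpha^-)=1$ and $h'(\alpha^+)=2$.
   Context: Thompson's group $F$ is the group of piecewise linear homeomorphisms of $[0,1]$ with finitely many dyadic breakpoints and slopes integer powers of $2$; composition is from left to right. Writing numbers in $(0,1)$ as $.s$ with $s$ an infinite binary word, $x_0$ maps $.00\alpha\mapsto .0\alpha$, $.01\alpha\mapsto .10\alpha$, $.1\alpha\mapsto .11\alpha$, and $x_1$ maps $.0\alpha\mapsto .0\alpha$, $.100\alpha\mapsto .10\alpha$, $.101\alpha\mapsto .110\alpha$, $.11\alpha\mapsto .111\alpha$. Here $h'(\alpha^-)$ and $h'(\alpha^+)$ denote the left and right derivatives of $h$ at $\alpha$. *)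

(* Defs.v *)
From Stdlib Require Import Reals Lra.
From Coquelicot Require Import Coquelicot.
Open Scope R_scope.

(* Elements of Thompson's group F are represented as functions R -> R
   (extended by the identity outside [0,1]).  Composition in F is from
   left to right: the product g h means "first g, then h", i.e. h o g. *)

Definition x0 (t : R) : R :=
  if Rlt_dec t 0 then t
  else if Rle_dec t (1/4) then 2 * t
  else if Rle_dec t (1/2) then t + 1/4
  else if Rle_dec t 1 then t / 2 + 1/2
  else t.

Definition x0inv (t : R) : R :=
  if Rlt_dec t 0 then t
  else if Rle_dec t (1/2) then t / 2
  else if Rle_dec t (3/4) then t - 1/4
  else if Rle_dec t 1 then 2 * t - 1
  else t.

Definition x1 (t : R) : R :=
  if Rlt_dec t 0 then t
  else if Rle_dec t (1/2) then t
  else if Rle_dec t (5/8) then 2 * t - 1/2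
  else if Rle_dec t (3/4) then t + 1/8
  else if Rle_dec t 1 then t / 2 + 1/2
  else t.

Definition x1inv (t : R) : R :=
  if Rlt_dec t 0 then t
  else if Rle_dec t (1/2) then t
  else if Rle_dec t (3/4) then (t + 1/2) / 2
  else if Rle_dec t (7/8) then t - 1/8
  else if Rle_dec t 1 then 2 * t - 1
  else t.

(* x = x0, y = x0^2 x1 (left-to-right: apply x0, x0, then x1). *)
Definition gx : R -> R := x0.
Definition gxinv : R -> R := x0inv.
Definition gy (t : R) : R := x1 (x0 (x0 t)).
Definition gyinv (t : R) : R := x0inv (x0inv (x1inv t)).

Fixpoint fpow (k : nat) (f : R -> R) (t : R) : R :=
  match k with
  | O => t
  | S k' => f (fpow k' f t)
  end.

Inductive in_H (m n : nat) : (R -> R) -> Prop :=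
  | H_id : in_H m n (fun t => t)
  | H_xm : forall h, in_H m n h -> in_H m n (fun t => fpow m gx (h t))
  | H_xmi : forall h, in_H m n h -> in_H m n (fun t => fpow m gxinv (h t))
  | H_yn : forall h, in_H m n h -> in_H m n (fun t => fpow n gy (h t))
  | H_yni : forall h, in_H m n h -> in_H m n (fun t => fpow n gyinv (h t)).

Definition dyadic (a : R) : Prop :=
  exists (k : Z) (p : nat), a = IZR k / 2 ^ p.

Definition left_deriv (h : R -> R) (a l : R) : Prop :=
  filterlim (fun t => (h t - h a) / (t - a)) (at_left a) (locally l).
Definition right_deriv (h : R -> R) (a l : R) : Prop :=
  filterlim (fun t => (h t - h a) / (t - a)) (at_right a) (locally l).

(* Main.v *)
Require Import Defs.
From Stdlib Require Import Reals Lra Lia FunctionalExtensionality.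
From Coquelicot Require Import Coquelicot.
Open Scope R_scope.

Lemma fpow_add (f : R -> R) a b t : fpow a f (fpow b f t) = fpow (a + b) f t.
Proof. induction a; simpl; [reflexivity | now rewrite IHa]. Qed.

Lemma fpow_S' (f : R -> R) k t : fpow (S k) f t = fpow k f (f t).
Proof.
  change (fpow (S k) f t) with (fpow (k + 1) f t) in * ||
  replace (S k) with (k + 1)%nat by lia.
  rewrite <- fpow_add. reflexivity.
Qed.

Lemma fpow_mul (f : R -> R) k j t : fpow k (fpow j f) t = fpow (k * j) f t.
Proof.
  induction k; simpl; [reflexivity|]. rewrite IHk, fpow_add. f_equal; lia.
Qed.

Lemma in_H_xi m n k h : in_H m n h -> in_H m n (fun t => fpow k (fpow m gxinv) (h t)).
Proof. intros H; induction k; simpl; [exact H | exact (H_xmi _ _ _ IHk)]. Qed.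

Lemma in_H_y m n k h : in_H m n h -> in_H m n (fun t => fpow k (fpow n gy) (h t)).
Proof. intros H; induction k; simpl; [exact H | exact (H_yn _ _ _ IHk)]. Qed.

Lemma x0inv_A k t : 0 <= t <= 1/2 -> fpow k x0inv t = t / 2 ^ k.
Proof.
  revert t; induction k; intros t Ht.
  - simpl; field.
  - rewrite fpow_S'.
    assert (E : x0inv t = t / 2).
    { unfold x0inv; destruct (Rlt_dec t 0); [lra|]; destruct (Rle_dec t (1/2)); lra. }
    rewrite E, IHk by lra. simpl. field. apply pow_nonzero; lra.
Qed.

Lemma gy_C k s : 0 <= s -> 4 ^ k * s <= 3/4 -> fpow k gy s = 4 ^ k * s.
Proof.
  revert s; induction k; intros s H1 H2.
  - simpl; lra.
  - rewrite fpow_S'.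
    assert (Hp : 1 <= 4 ^ k) by (apply pow_R1_Rle; lra).
    simpl in H2.
    assert (Hs : s <= 3/16) by nra.
    assert (E : gy s = 4 * s).
    { unfold gy, x0, x1.
      destruct (Rlt_dec s 0); [lra|].
      destruct (Rle_dec s (1/4)); [|lra].
      destruct (Rlt_dec (2*s) 0); [lra|].
      destruct (Rle_dec (2*s) (1/4)).
      - destruct (Rlt_dec (2*(2*s)) 0); [lra|].
        destruct (Rle_dec (2*(2*s)) (1/2)); [lra|].
        destruct (Rle_dec (2*(2*s)) (5/8)); lra.
      - destruct (Rle_dec (2*s) (1/2)); [|lra].
        destruct (Rlt_dec (2*s + 1/4) 0); [lra|].
        destruct (Rle_dec (2*s + 1/4) (1/2)); [lra|].
        destruct (Rle_dec (2*s + 1/4) (5/8)); lra. }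
    rewrite E, IHk by nra. simpl. ring.
Qed.

Definition hh (N : nat) (t : R) : R := fpow N gy (fpow (2 * N) gxinv t).

Lemma hh_left N t : 0 <= t <= 1/2 -> hh N t = t.
Proof.
  intros Ht. unfold hh, gxinv. rewrite x0inv_A by lra.
  assert (P : 2 ^ (2 * N) = 4 ^ N) by (rewrite pow_mult; f_equal; lra).
  assert (0 < 4 ^ N) by (apply pow_lt; lra).
  rewrite P, gy_C.
  - field; lra.
  - apply Rmult_le_pos; [lra| left; apply Rinv_0_lt_compat; lra].
  - replace (4 ^ N * (t / 4 ^ N)) with t by (field; lra). lra.
Qed.

Lemma hh_right N t : (1 <= N)%nat -> 1/2 <= t <= 5/8 -> hh N t = 2 * t - 1/2.
Proof.
  intros HN Ht. unfold hh, gxinv.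
  destruct N as [|K]; [lia|].
  replace (2 * S K)%nat with (S (2 * K + 1)) by lia.
  rewrite (fpow_S' x0inv).
  assert (E : x0inv t = t - 1/4).
  { unfold x0inv; destruct (Rlt_dec t 0); [lra|].
    destruct (Rle_dec t (1/2)); [lra|]. destruct (Rle_dec t (3/4)); lra. }
  rewrite E, x0inv_A by lra.
  assert (P : 4 ^ S K = 2 * 2 ^ (2 * K + 1)).
  { change (2 * 2 ^ (2 * K + 1)) with (2 ^ S (2 * K + 1)).
    replace (S (2 * K + 1)) with (2 * S K)%nat by lia.
    rewrite pow_mult; f_equal; lra. }
  assert (0 < 2 ^ (2 * K + 1)) by (apply pow_lt; lra).
  rewrite gy_C.
  - rewrite P; field; lra.
  - apply Rmult_le_pos; [lra| left; apply Rinv_0_lt_compat; lra].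
  - rewrite P. replace (2 * 2 ^ (2 * K + 1) * ((t - 1 / 4) / 2 ^ (2 * K + 1)))
      with (2 * (t - 1/4)) by (field; lra). lra.
Qed.

Theorem lemma3p2 (m n : nat) (hm : (1 <= m)%nat) (hn : (1 <= n)%nat) :
  exists (h : R -> R) (a : R),
    in_H m n h /\ dyadic a /\ 0 < a < 1 /\
    h a = a /\ left_deriv h a 1 /\ right_deriv h a 2.
Proof.
  assert (HN : (1 <= m * n)%nat) by nia.
  assert (Heq : forall t, fpow m (fpow n gy) (fpow (2 * n) (fpow m gxinv) t) = hh (m * n) t).
  { intros t. unfold hh. rewrite !fpow_mul.
    replace (2 * n * m)%nat with (2 * (m * n))%nat by lia.
    replace (m * n)%nat with (m * n)%nat by lia. reflexivity. }
  exists (hh (m * n)), (1/2).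
  assert (Hin : in_H m n (hh (m * n))).
  { assert (H1 := in_H_y m n m _ (in_H_xi m n (2 * n) _ (H_id m n))).
    simpl in H1.
    assert (E : (fun t => fpow m (fpow n gy) (fpow (2 * n) (fpow m gxinv) t)) = hh (m * n)).
    { apply functional_extensionality; exact Heq. }
    rewrite <- E; exact H1. }
  split; [exact Hin|].
  split; [exists 1%Z, 1%nat; simpl; lra|].
  split; [lra|].
  split; [apply hh_left; lra|].
  unfold left_deriv, right_deriv; rewrite (hh_left (m * n) (1/2)) by lra.
  split.
  - apply filterlim_ext_loc with (f := fun _ => 1); [|apply filterlim_const].
    exists (mkposreal (1/8) ltac:(lra)). intros y Hy Hlt.
    unfold ball in Hy; simpl in Hy; unfold AbsRing_ball, abs, minus, plus, opp in Hy; simpl in Hy.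
    apply Rabs_def2 in Hy.
    rewrite hh_left by lra. field; lra.
  - apply filterlim_ext_loc with (f := fun _ => 2); [|apply filterlim_const].
    exists (mkposreal (1/8) ltac:(lra)). intros y Hy Hlt.
    unfold ball in Hy; simpl in Hy; unfold AbsRing_ball, abs, minus, plus, opp in Hy; simpl in Hy.
    apply Rabs_def2 in Hy.
    rewrite hh_right; [field; lra | exact HN | lra].
Qed.
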